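(* In a combinatorial auction with single-dimensional signals and SOS valuations, fix a true signal profile $\mathbf{s}$ (reported truthfully) and a welfare-maximizing allocation $T^*=(T_i^* )_i$ at $\mathbf{s}$. Then the expected welfare $\mathbb{E}[\sum_i v_{i\tilde T_i}(\mathbf{s})]$ of the Random Sampling mechanism is at least $\frac14\mathsf{OTHER}$, where $\mathsf{OTHER}=\sum_i v_{iT_i^*}(\mathbf{s}_{-i},0_i)$.
   Context: Setting: $n$ agents, $m$ items; agent $i$ has private signal $s_i\ge0$; her value for bundle $T$ is $v_{iT}(\mathbf{s})\ge0$, public, weakly increasing in each coordinate, strictly in $s_i$; each $v_{iT}$ is SOS: for every coordinate $j$, $s_j$, $\delta\ge0$, and $\mathbf{s}'_{-j}\le\mathbf{s}_{-j}$ coordinate-wise, $v(\mathbf{s}'_{-j},s_j+\delta)-v(\mathbf{s}'_{-j},s_j)\ge v(\mathbf{s}_{-j},s_j+\delta)-v(\mathbf{s}_{-j},s_j)$. $(\mathbf{s}_{-i},0_i)$ is $\mathbf{s}$ with $s_i$ set to $0$. Random Sampling (on reports $\mathbf{s}$): split agents uniformly at random into $A,B$; for $i\in B$ let $\tilde v_{iT}=v_{iT}(\mathbf{s}_A,\mathbf{0}_B)$ (all signals of $B$, including $i$'s own, set to $0$), for $i\in A$ let $\tilde v_{iT}=0$; choose $\tilde T\in\arg\max\sum_{i\in B}\tilde v_{i\tilde T_i}$ over allocations to agents of $B$; no payments. *)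

(* Defs.v *)
From HB Require Import structures.
From mathcomp Require Import all_boot all_order all_algebra.
Set Implicit Arguments. Unset Strict Implicit. Unset Printing Implicit Defensive.
Import Order.TTheory GRing.Theory Num.Theory.
Local Open Scope ring_scope.

Definition profile (R : realFieldType) (n : nat) := 'I_n -> R.

(* valuations: v i T s = v_{iT}(s) *)
Definition valuations (R : realFieldType) (n m : nat) :=
  'I_n -> {set 'I_m} -> profile R n -> R.

Definition nonneg_profile (R : realFieldType) n (s : profile R n) :=
  forall j, 0 <= s j.

Definition le_profile (R : realFieldType) n (s s' : profile R n) :=
  forall j, s j <= s' j.

Definition upd (R : realFieldType) n (s : profile R n) (j : 'I_n) (x : R)
  : profile R n := fun k => if k == j then x else s k.

Definition zero_on (R : realFieldType) n (B : {set 'I_n}) (s : profile R n)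
  : profile R n := fun k => if k \in B then 0 else s k.

Definition val_nonneg (R : realFieldType) n m (v : valuations R n m) :=
  forall i T s, nonneg_profile s -> 0 <= v i T s.

Definition val_monotone (R : realFieldType) n m (v : valuations R n m) :=
  forall i T s s', nonneg_profile s -> le_profile s s' -> v i T s <= v i T s'.

Definition val_strict_own (R : realFieldType) n m (v : valuations R n m) :=
  forall i T s x, nonneg_profile s -> s i < x -> v i T s < v i T (upd s i x).

Definition SOS (R : realFieldType) n (f : profile R n -> R) :=
  forall (j : 'I_n) (s s' : profile R n) (delta : R),
    nonneg_profile s' -> le_profile s' s -> 0 <= delta ->
    f (upd s j (s j + delta)) - f (upd s j (s j))
      <= f (upd s' j (s j + delta)) - f (upd s' j (s j)).

Definition val_SOS (R : realFieldType) n m (v : valuations R n m) :=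
  forall i T, SOS (v i T).

(* An allocation: pairwise disjoint bundles (items may stay unallocated). *)
Definition allocation n m (T : 'I_n -> {set 'I_m}) :=
  forall i j, i != j -> [disjoint T i & T j].

Definition allocation_to n m (B : {set 'I_n}) (T : 'I_n -> {set 'I_m}) :=
  allocation T /\ forall i, i \notin B -> T i = set0.

Definition welfare (R : realFieldType) n m (v : valuations R n m)
  (T : 'I_n -> {set 'I_m}) (s : profile R n) : R :=
  \sum_(i < n) v i (T i) s.

(* Welfare of the bidders of B under the Random Sampling estimates
   ~v_{iT} = v_{iT}(s_A, 0_B) for i in B (and 0 for i in A). *)
Definition rs_est_welfare (R : realFieldType) n m (v : valuations R n m)
  (B : {set 'I_n}) (T : 'I_n -> {set 'I_m}) (s : profile R n) : R :=
  \sum_(i < n | i \in B) v i (T i) (zero_on B s).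

Definition welfare_max (R : realFieldType) n m (v : valuations R n m)
  (T : 'I_n -> {set 'I_m}) (s : profile R n) :=
  allocation T /\ forall T', allocation T' -> welfare v T' s <= welfare v T s.

(* Tt is a valid outcome of Random Sampling for partition (A = ~:B, B) *)
Definition rs_choice (R : realFieldType) n m (v : valuations R n m)
  (B : {set 'I_n}) (T : 'I_n -> {set 'I_m}) (s : profile R n) :=
  allocation_to B T /\
  forall T', allocation_to B T' -> rs_est_welfare v B T' s <= rs_est_welfare v B T s.

Definition OTHER (R : realFieldType) n m (v : valuations R n m)
  (Tstar : 'I_n -> {set 'I_m}) (s : profile R n) : R :=
  \sum_(i < n) v i (Tstar i) (upd s i 0).

(* Expected welfare of Random Sampling: B uniform over all 2^n subsets
   (each agent independently in A or B w.p. 1/2), Tt B the chosen allocation. *)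
Definition rs_expected_welfare (R : realFieldType) n m (v : valuations R n m)
  (Tt : {set 'I_n} -> 'I_n -> {set 'I_m}) (s : profile R n) : R :=
  (\sum_(B : {set 'I_n}) welfare v (Tt B) s) / (2 ^+ n).

(* Main.v *)
Require Import Defs.
From HB Require Import structures.
From mathcomp Require Import all_boot all_order all_algebra.
From Stdlib Require Import FunctionalExtensionality.
From mathcomp Require Import lra.
Import Order.TTheory GRing.Theory Num.Theory.
Local Open Scope ring_scope.


Lemma cardS (T : finType) : (#|{set T}| = 2 ^ #|T|)%N.
Proof.
rewrite -cardsT -card_powerset.
apply: eq_card => B; by rewrite !inE subsetT.
Qed.

Definition kp (R : realFieldType) n (s : profile R n) (K : {set 'I_n}) : profile R n :=
  zero_on (~:K) s.
Arguments kp {R n}.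

Lemma kpE (R : realFieldType) n (s : profile R n) (K : {set 'I_n}) k :
  kp s K k = if k \in K then s k else 0.
Proof. by rewrite /kp /zero_on inE; case: (k \in K). Qed.

Lemma kp_nonneg (R : realFieldType) n (s : profile R n) (K : {set 'I_n}) :
  nonneg_profile s -> nonneg_profile (kp s K).
Proof. by move=> hs k; rewrite kpE; case: ifP. Qed.

Lemma kp_le (R : realFieldType) n (s : profile R n) (K K' : {set 'I_n}) :
  nonneg_profile s -> K \subset K' -> le_profile (kp s K) (kp s K').
Proof.
move=> hs hK k; rewrite !kpE; case: ifP => hk.
  by rewrite (subsetP hK _ hk).
by case: ifP.
Qed.

Lemma upd_same (R : realFieldType) n (x : profile R n) j : upd x j (x j) = x.
Proof.
apply: functional_extensionality => k; rewrite /upd; by case: eqP => // ->.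
Qed.

Lemma upd_kp_add (R : realFieldType) n (s : profile R n) (K : {set 'I_n}) j :
  j \notin K -> upd (kp s K) j (0 + s j) = kp s (j |: K).
Proof.
move=> hj; apply: functional_extensionality => k; rewrite /upd !kpE !inE add0r.
by case: eqP => [->|].
Qed.

Lemma kp_j0 (R : realFieldType) n (s : profile R n) (K : {set 'I_n}) j :
  j \notin K -> kp s K j = 0.
Proof. by move=> hj; rewrite kpE (negbTE hj). Qed.

Lemma sub_step (R : realFieldType) n (f : profile R n -> R) (s : profile R n) :
  SOS f -> nonneg_profile s -> forall k (W U : {set 'I_n}), #|W| = k ->
  [disjoint U & W] -> f (kp s (U :|: W)) - f (kp s U) <= f (kp s W) - f (kp s set0).
Proof.
move=> hf hs; elim=> [|k IH] W U hW hUW.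
  move/eqP: hW; rewrite cards_eq0 => /eqP ->; by rewrite setU0 !subrr.
have : (0 < #|W|)%N by rewrite hW.
rewrite card_gt0 => /set0Pn [j hjW].
set W0 := W :\ j.
have hW0 : #|W0| = k by move: hW; rewrite (cardsD1 j W) hjW add1n => -[].
have hjU : j \notin U.
  by rewrite (disjointFl hUW hjW).
have hjW0 : j \notin W0 by rewrite !inE eqxx.
have hUW0 : [disjoint U & W0].
  by apply: disjointWr hUW; rewrite subD1set.
have hj : j \notin U :|: W0 by rewrite inE negb_or hjU.
have eW : W = j |: W0 by rewrite setD1K.
have eUW : U :|: W = j |: (U :|: W0) by rewrite eW setUCA.
have := IH W0 U hW0 hUW0.
have hS := hf j (kp s (U :|: W0)) (kp s W0) (s j) (kp_nonneg _ _ s _ hs)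
  (kp_le _ _ s _ _ hs (subsetUr U W0)) (hs j).
rewrite (kp_j0 _ _ s _ _ hj) !upd_kp_add // in hS.
rewrite -{1}(kp_j0 _ _ s _ _ hj) upd_same -{1}(kp_j0 _ _ s _ _ hjW0) upd_same in hS.
rewrite eUW eW.
move=> h2; move: hS h2.
set a := f _; set b := f _; set c := f _; set d := f _; set e := f _; set g := f _.
move=> h1 h2.
have := lerD h1 h2.
by rewrite addrA subrK addrA subrK.
Qed.

Definition tog n (i : 'I_n) (K : {set 'I_n}) := if i \in K then K :\ i else i |: K.
Arguments tog {n}.

Lemma tog_inv n (i : 'I_n) : involutive (tog i).
Proof.
move=> K; case h: (i \in K); rewrite /tog h.
  by rewrite !inE eqxx /= (setD1K h).
by rewrite !inE eqxx /= setU1K // h.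
Qed.

Lemma keystep (R : realFieldType) n (f : profile R n -> R) (s : profile R n) (i : 'I_n) :
  SOS f -> nonneg_profile s -> (forall x, nonneg_profile x -> 0 <= f x) ->
  f (upd s i 0) * 2 ^+ n <=
  4%:R * \sum_(K : {set 'I_n}) (if i \in K then 0 else f (kp s K)).
Proof.
move=> hf hs hnn.
have ha : forall K : {set 'I_n},
    f (upd s i 0) <= f (kp s (K :\ i)) + f (kp s (~:K :\ i)).
  move=> K.
  have hd : [disjoint K :\ i & ~:K :\ i].
    rewrite -setI_eq0; apply/eqP/setP => x; rewrite !inE.
    by case: (x \in K); rewrite ?andbF.
  have := sub_step _ _ f s hf hs _ _ _ (erefl _) hd.
  have -> : K :\ i :|: ~: K :\ i = ~: [set i].
    by apply/setP => x; rewrite !inE; case: (x \in K); rewrite ?andbT ?andbF ?orbF.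
  have -> : kp s (~: [set i]) = upd s i 0.
    apply: functional_extensionality => x; rewrite kpE /upd !inE.
    by case: eqP.
  have h0 := hnn _ (kp_nonneg _ _ s set0 hs).
  have h1 := hnn _ (kp_nonneg _ _ s (~:K :\ i) hs).
  move=> h; lra.
have hb : f (upd s i 0) * 2 ^+ n <=
    \sum_(K : {set 'I_n}) f (kp s (K :\ i)) + \sum_(K : {set 'I_n}) f (kp s (~:K :\ i)).
  rewrite -big_split /=.
  have -> : f (upd s i 0) * 2 ^+ n = \sum_(K : {set 'I_n}) f (upd s i 0).
    rewrite sumr_const cardS card_ord.
    by rewrite -[in RHS]mulr_natr natrX.
    idtac.
  by apply: ler_sum => K _; apply: ha.
have hc : \sum_(K : {set 'I_n}) f (kp s (~:K :\ i)) = \sum_(K : {set 'I_n}) f (kp s (K :\ i)).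
  by rewrite (reindex_inj (@setC_inj _)) /=; apply: eq_bigr => K _; rewrite setCK.
have hd : \sum_(K : {set 'I_n}) f (kp s (K :\ i)) =
    \sum_(K : {set 'I_n}) (if i \in K then f (kp s (K :\ i)) else 0) +
    \sum_(K : {set 'I_n}) (if i \in K then 0 else f (kp s K)).
  rewrite -big_split /=; apply: eq_bigr => K _.
  case: ifP => h; first by rewrite addr0.
  rewrite add0r; congr (f (kp s _)); apply/setP => x; rewrite !inE.
  by case: eqP => // ->; rewrite h.
have he : \sum_(K : {set 'I_n}) (if i \in K then f (kp s (K :\ i)) else 0) =
    \sum_(K : {set 'I_n}) (if i \in K then 0 else f (kp s K)).
  rewrite (reindex_inj (inv_inj (@tog_inv _ i))) /=; apply: eq_bigr => K _.
  case h: (i \in K); rewrite /tog h.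
    by rewrite !inE eqxx.
  by rewrite !inE eqxx /= setU1K // h.
rewrite hc hd he in hb.
lra.
Qed.

Lemma step1 (R : realFieldType) (n m : nat) (v : valuations R n m)
  (s : profile R n) (Tstar : 'I_n -> {set 'I_m}) (B : {set 'I_n}) (T : 'I_n -> {set 'I_m}) :
  val_nonneg v -> val_monotone v -> nonneg_profile s -> allocation Tstar ->
  rs_choice v B T s ->
  \sum_(i < n | i \in B) v i (Tstar i) (zero_on B s) <= welfare v T s.
Proof.
move=> hnn hmon hs hal [hT hmax].
set T' := fun i => if i \in B then Tstar i else set0.
have hT' : allocation_to B T'.
  split; last by move=> i hi; rewrite /T' (negbTE hi).
  move=> i j hij; rewrite /T'; case: (i \in B); case: (j \in B) => //.
  - by apply: hal.
  - by rewrite -setI_eq0 setI0.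
  - by rewrite -setI_eq0 set0I.
  - by rewrite -setI_eq0 set0I.
have hz : nonneg_profile (zero_on B s).
  by move=> k; rewrite /zero_on; case: ifP.
have hzl : le_profile (zero_on B s) s.
  by move=> k; rewrite /zero_on; case: ifP.
have := hmax _ hT'; rewrite /rs_est_welfare.
rewrite (eq_bigr (fun i => v i (Tstar i) (zero_on B s))); last first.
  by move=> i hi; rewrite /T' hi.
move=> h; apply: le_trans h _.
rewrite /welfare [X in _ <= X](bigID (fun i => i \in B)) /=.
have hA : \sum_(i < n | i \in B) v i (T i) (zero_on B s) <= \sum_(i < n | i \in B) v i (T i) s.
  by apply: ler_sum => i _; apply: hmon.
have hB : 0 <= \sum_(i < n | i \notin B) v i (T i) s.
  by apply: sumr_ge0 => i _; apply: hnn.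
lra.
Qed.

Theorem mainTheorem7 (R : realFieldType) (n m : nat) (v : valuations R n m)
  (s : profile R n) (Tstar : 'I_n -> {set 'I_m})
  (Tt : {set 'I_n} -> 'I_n -> {set 'I_m}) :
  val_nonneg v -> val_monotone v -> val_strict_own v -> val_SOS v ->
  nonneg_profile s ->
  welfare_max v Tstar s ->
  (forall B : {set 'I_n}, rs_choice v B (Tt B) s) ->
  OTHER v Tstar s / 4%:R <= rs_expected_welfare v Tt s.
Proof.
move=> hnn hmon _ hsos hs [hal _] hrs.
have h1 : \sum_(B : {set 'I_n}) \sum_(i < n | i \in B) v i (Tstar i) (zero_on B s)
    <= \sum_(B : {set 'I_n}) welfare v (Tt B) s.
  by apply: ler_sum => B _; apply: step1.
have h2 : \sum_(B : {set 'I_n}) \sum_(i < n | i \in B) v i (Tstar i) (zero_on B s)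
    = \sum_(i < n) \sum_(K : {set 'I_n}) (if i \in K then 0 else v i (Tstar i) (kp s K)).
  under eq_bigr do rewrite big_mkcond.
  rewrite exchange_big /=; apply: eq_bigr => i _.
  rewrite (reindex_inj (@setC_inj _)) /=; apply: eq_bigr => K _.
  by rewrite inE if_neg.
have h3 : OTHER v Tstar s * 2 ^+ n <=
    4%:R * \sum_(i < n) \sum_(K : {set 'I_n}) (if i \in K then 0 else v i (Tstar i) (kp s K)).
  rewrite /OTHER mulr_suml mulr_sumr; apply: ler_sum => i _.
  apply: keystep; first exact: hsos.
    exact: hs.
  by move=> x hx; apply: hnn.
rewrite /rs_expected_welfare.
have h2n : (0 : R) < 2 ^+ n by apply: exprn_gt0.
rewrite ler_pdivlMr // mulrAC ler_pdivrMr; last by [].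
rewrite -h2 in h3; lra.
Qed.
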